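(* Let $\mu$ be a cylindric partition on $\mathcal C_{k,n}$ and $t$ a nonnegative integer. There is a bijection between marble games of length $t$ with initial arrangement $\operatorname{Arr}(\mu)$ and semistandard cylindric tableaux with inner shape $\mu$ (and arbitrary outer shape) whose entries lie in $\{1,2,\dots,t\}$.
   Context: Fix integers $n>k\ge1$. A cylindric partition is a weakly decreasing integer sequence $(\lambda_m)_{m\in\mathbb Z}$ with $\lambda_m=\lambda_{m+k}+n-k$. A point $(x,y)\in\mathbb Z^2$ lies in $\lambda$ if $y\le\lambda_x$. Boxes are classes of points modulo translation by multiples of $(-k,n-k)$; $\pi$ the projection. $\mu\subseteq\lambda$ means $\mu_m\le\lambda_m$ for all $m$. A semistandard cylindric tableau of shape $\lambda/\mu$ (with $\mu\subseteq\lambda$) is a map $R$ from the boxes in $\lambda$ but not $\mu$ to a totally ordered set with $R(\pi(x,y_1))\le R(\pi(x,y_2))$ whenever $(x,y_1),(x,y_2)$ lie in $\lambda$ but not $\mu$ and $y_1<y_2$, and $R(\pi(x_1,y))<R(\pi(x_2,y))$ whenever $(x_1,y),(x_2,y)$ lie in $\lambda$ but not $\mu$ and $x_1<x_2$; $\mu$ is its inner shape. Marble games: there are $k$ people $p_0,\dots,p_{k-1}$ in a circle, indices taken mod $k$, with $p_{i+1}$ the clockwise neighbour of $p_i$. For a cylindric partition $\alpha$, the arrangement $\operatorname{Arr}(\alpha)$ gives $p_i$ exactly $\alpha_{i-1}-\alpha_i$ marbles (a total of $n-k$ marbles). A turn is a tuple $(a_0,\dots,a_{k-1})$ of nonnegative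 integers, applied to an arrangement, in which simultaneously each $p_i$ passes $a_i$ marbles to $p_{i+1}$, where $a_i$ is at most the number of marbles $p_i$ has before the turn. A marble game of length $t$ is an initial arrangement of the $n-k$ marbles among the $k$ people together with a sequence of $t$ successive (valid) turns. *)

(* Defs.v *)
From mathcomp Require Import all_boot all_order all_algebra.
Set Implicit Arguments. Unset Strict Implicit. Unset Printing Implicit Defensive.
Import Order.TTheory GRing.Theory Num.Theory.
Local Open Scope ring_scope.

Definition cylindric (n k : nat) (lam : int -> int) : Prop :=
  (forall m : int, lam (m + 1) <= lam m) /\
  (forall m : int, lam m = lam (m + k%:Z) + (n%:Z - k%:Z)).

Definition subpart (mu lam : int -> int) : Prop := forall m : int, mu m <= lam m.

Definition in_skew (lam mu : int -> int) (x y : int) : bool :=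
  (y <= lam x) && ~~ (y <= mu x).

(* A map on boxes (classes of points modulo translation by (-k, n-k)) is encoded
   as a function on points R : Z -> Z -> nat invariant under that translation;
   to make the encoding canonical, R is required to be 0 outside lam/mu. *)
Definition ssct (n k : nat) (lam mu : int -> int) (t : nat)
    (R : int -> int -> nat) : Prop :=
  [/\ (forall x y : int, R (x - k%:Z) (y + (n%:Z - k%:Z)) = R x y),
      (forall x y : int, ~~ in_skew lam mu x y -> R x y = 0%N),
      (forall x y : int, in_skew lam mu x y -> (1 <= R x y <= t)%N),
      (forall x y1 y2 : int, in_skew lam mu x y1 -> in_skew lam mu x y2 ->
          y1 < y2 -> (R x y1 <= R x y2)%N) &
      (forall x1 x2 y : int, in_skew lam mu x1 y -> in_skew lam mu x2 y ->
          x1 < x2 -> (R x1 y < R x2 y)%N)].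

Record tableau (n k : nat) (mu : int -> int) (t : nat) := Tableau {
  tab_shape : int -> int;
  tab_fill : int -> int -> nat;
  tab_shape_cyl : cylindric n k tab_shape;
  tab_sub : subpart mu tab_shape;
  tab_ssct : ssct n k tab_shape mu t tab_fill }.

(* Marble games: people p_0..p_{k-1} indexed by 'I_k; p_{i+1} = ordS i. *)
Definition arrangement (k : nat) := {ffun 'I_k -> nat}.
Definition turn (k : nat) := {ffun 'I_k -> nat}.

Definition apply_turn (k : nat) (A : arrangement k) (a : turn k) : arrangement k :=
  [ffun i => (A i - a i + a (ord_pred i))%N].

Definition valid_turn (k : nat) (A : arrangement k) (a : turn k) : bool :=
  [forall i, (a i <= A i)%N].

Fixpoint valid_turns (k : nat) (A : arrangement k) (s : seq (turn k)) : Prop :=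
  match s with
  | [::] => True
  | a :: s' => valid_turn A a /\ valid_turns (apply_turn A a) s'
  end.

Record marble_game (n k t : nat) := MarbleGame {
  mg_init : arrangement k;
  mg_turns : seq (turn k);
  mg_total : (\sum_(i < k) mg_init i)%N = (n - k)%N;
  mg_length : size mg_turns = t;
  mg_valid : valid_turns mg_init mg_turns }.

(* Arr(alpha): p_i gets alpha_{i-1} - alpha_i marbles (nonnegative for a
   cylindric partition, so the absolute value is exact). *)
Definition Arr (k : nat) (alpha : int -> int) : arrangement k :=
  [ffun i : 'I_k => absz (alpha (i%:Z - 1)%R - alpha i%:Z)%R].

(* Main.v *)
Require Import Defs.
From mathcomp Require Import all_boot all_order all_algebra zify.
From Stdlib Require Import FunctionalExtensionality ProofIrrelevance.
Import Order.TTheory GRing.Theory Num.Theory.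
Set Implicit Arguments. Unset Strict Implicit. Unset Printing Implicit Defensive.
Local Open Scope ring_scope.

Section S.
Variables (n k : nat) (hk : (1 <= k)%N).

Lemma idx_lt (x : int) : (absz (x %% k%:Z)%Z < k)%N.
Proof.
have k0 : (k%:Z != 0) by rewrite eqz_nat -lt0n.
have h1 := modz_ge0 x k0. have h2 := ltz_mod x k0. lia.
Qed.

Definition idx (x : int) : 'I_k := Ordinal (idx_lt x).

Lemma idxE x : (idx x)%:Z = (x %% k%:Z)%Z.
Proof.
have k0 : (k%:Z != 0) by rewrite eqz_nat -lt0n.
have h1 := modz_ge0 x k0. rewrite /= gez0_abs //.
Qed.

Lemma idxDk x : idx (x + k%:Z) = idx x.
Proof. apply: val_inj => /=. by rewrite modzDr. Qed.

Lemma idx_ord (i : 'I_k) : idx i%:Z = i.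
Proof. apply: val_inj => /=. rewrite modz_small //. apply/andP; split => //. by rewrite ltz_nat. Qed.

Lemma idx_pred (i : 'I_k) : idx (i%:Z - 1) = ord_pred i.
Proof.
apply: val_inj => /=.
have -> : (i%:Z - 1 = ((i + k).-1)%N%:Z - k%:Z).
  have := ltn_ord i. lia.
rewrite -modzDr. rewrite subrK modz_nat. by [].
Qed.

Lemma per_ind (Q : int -> Prop) :
  (forall z, Q (z + k%:Z) <-> Q z) -> forall z, Q z <-> Q (idx z)%:Z.
Proof.
move=> hQ z. rewrite idxE.
have hm : forall (m : nat) r, Q (r + m%:Z * k%:Z) <-> Q r.
  elim=> [|m IH] r; first by rewrite mul0r addr0.
  have -> : r + m.+1%:Z * k%:Z = (r + m%:Z * k%:Z) + k%:Z by lia.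
  by rewrite hQ.
rewrite {1}(divz_eq z k) addrC.
case: (z %/ k)%Z => m.
  by apply: hm.
set r := (z %% k)%Z.
have e : r = (r + Negz m * k) + m.+1%:Z * k%:Z by rewrite NegzE; lia.
rewrite {2}e. by rewrite hm.
Qed.

Definition per (L : int -> int) := forall x, L x = L (x + k%:Z) + (n%:Z - k%:Z).
Definition decr (L : int -> int) := forall x, L (x + 1) <= L x.

Lemma per_diff L L' (a : turn k) : per L -> per L' ->
  (forall i : 'I_k, (a i)%:Z = L' i%:Z - L i%:Z) ->
  forall x, (a (idx x))%:Z = L' x - L x.
Proof.
move=> pL pL' ha x.
apply/(per_ind (Q := fun x => (a (idx x))%:Z = L' x - L x)).
  move=> z. rewrite idxDk (pL z) (pL' z). split=> ->; lia.
by rewrite idx_ord ha.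
Qed.

Lemma arr_valid L L' (a : turn k) : per L -> per L' -> decr L ->
  (forall i : 'I_k, (a i)%:Z = L' i%:Z - L i%:Z) ->
  (valid_turn (Arr k L) a <-> forall x, L' (x + 1) <= L x).
Proof.
move=> pL pL' dL ha.
have ai : forall i : 'I_k, (a i <= Arr k L i)%N = (L' i%:Z <= L (i%:Z - 1)).
  move=> i. rewrite ffunE. have := dL (i%:Z - 1). rewrite subrK. have := ha i.
  move=> h1 h2. apply/idP/idP; lia.
split.
- move/forallP=> H x.
  have := (per_ind (Q := fun z => L' z <= L (z - 1))).
  move=> /(_ _ (x + 1)) [].
    move=> z. rewrite (pL' z) (pL (z - 1)). have -> : z + k%:Z - 1 = z - 1 + k%:Z by lia.
    split; lia.
  move=> _ h. rewrite addrK in h. apply: h. by rewrite -ai.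
- move=> H. apply/forallP => i. rewrite ai. have := H (i%:Z - 1). by rewrite subrK.
Qed.

Lemma arr_apply L L' (a : turn k) : per L -> per L' -> decr L ->
  (forall i : 'I_k, (a i)%:Z = L' i%:Z - L i%:Z) ->
  valid_turn (Arr k L) a -> apply_turn (Arr k L) a = Arr k L'.
Proof.
move=> pL pL' dL ha /forallP va.
apply/ffunP => i. rewrite !ffunE.
have h1 := va i. rewrite ffunE in h1.
have h2 := per_diff pL pL' ha (i%:Z - 1). rewrite idx_pred in h2.
have h3 := ha i. have h4 := dL (i%:Z - 1). rewrite subrK in h4.
apply/eqP. rewrite -eqz_nat. apply/eqP. lia.
Qed.

Definition a0 : turn k := [ffun=> 0%N].

Lemma valid_chain (s : seq (turn k)) (L : nat -> int -> int) :
  (forall j, per (L j)) -> decr (L 0%N) -> (forall j x, L j x <= L j.+1 x) ->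
  (forall j (i : 'I_k), (j < size s)%N -> ((nth a0 s j) i)%:Z = L j.+1 i%:Z - L j i%:Z) ->
  (valid_turns (Arr k (L 0%N)) s <-> forall j, (j < size s)%N -> forall x, L j.+1 (x + 1) <= L j x).
Proof.
elim: s L => [|a s IH] L pL dL mL hn /=; first by split.
have ha : forall i : 'I_k, (a i)%:Z = L 1%N i%:Z - L 0%N i%:Z by move=> i; apply: (hn 0%N).
have hv := arr_valid (pL 0%N) (pL 1%N) dL ha.
have d1 : (forall x, L 1%N (x + 1) <= L 0%N x) -> decr (L 1%N).
  move=> h x. have := h x. have := mL 0%N x. lia.
have hn' : forall j (i : 'I_k), (j < size s)%N -> ((nth a0 s j) i)%:Z = L j.+2 i%:Z - L j.+1 i%:Z.
  by move=> j i hj; apply: (hn j.+1).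
split.
- move=> [va vs].
  have i0 := (proj1 hv) va.
  rewrite (arr_apply (pL 0%N) (pL 1%N) dL ha va) in vs.
  have := (IH (fun j => L j.+1) (fun j => pL j.+1) (d1 i0) (fun j => mL j.+1) hn').
  move=> [h _]. have := h vs => H.
  case=> [|j] hj //. exact: H.
- move=> H. have i0 := H 0%N isT. have va := (proj2 hv) i0. split=> //.
  rewrite (arr_apply (pL 0%N) (pL 1%N) dL ha va).
  apply: (proj2 (IH (fun j => L j.+1) (fun j => pL j.+1) (d1 i0) (fun j => mL j.+1) hn')).
  move=> j hj. exact: (H j.+1).
Qed.

Lemma sum_bool_le N (P : nat -> bool) : (\sum_(i < N) P i <= N)%N.
Proof.
elim: N => [|N IH]; first by rewrite big_ord0.
rewrite big_ord_recr /=. case: (P N) => /=; first by rewrite addn1 ltnS.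
by rewrite addn0 (leq_trans IH).
Qed.

Lemma sum_b_le N (P : 'I_N -> bool) : (\sum_(i < N) P i <= N)%N.
Proof.
rewrite -[X in (_ <= X)%N]card_ord -sum1_card. apply: leq_sum => i _. exact: leq_b1.
Qed.

Lemma sum_b_all N (P : 'I_N -> bool) : (forall i, P i) -> (\sum_(i < N) P i = N)%N.
Proof.
move=> H. rewrite -[RHS]card_ord -sum1_card. apply: eq_bigr => i _. by rewrite H.
Qed.

Lemma sum_lt T r : (\sum_(j < T) ((j < r)%N : nat) = minn r T)%N.
Proof.
elim: T => [|T IH]; first by rewrite big_ord0 minn0.
rewrite big_ord_recr /= IH. case: (ltnP T r) => h /=; lia.
Qed.

Lemma sum_bool_all N (P : nat -> bool) : (forall i, (i < N)%N -> P i) -> (\sum_(i < N) P i = N)%N.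
Proof.
elim: N => [|N IH] H; first by rewrite big_ord0.
rewrite big_ord_recr /= IH ?H //; first by rewrite addn1.
move=> i hi; apply: H; lia.
Qed.

Lemma count_thr N (P : nat -> bool) :
  (forall d d', (d' <= d)%N -> (d < N)%N -> P d -> P d') ->
  forall d, (d < N)%N -> P d = (d < \sum_(i < N) P i)%N.
Proof.
elim: N => [|N IH] Hd d hd //.
rewrite big_ord_recr /=.
have IH' := IH (fun d d' h1 h2 => Hd d d' h1 (leq_trans h2 (leqnSn _))).
case PN: (P N).
- have all : forall i, (i < N)%N -> P i.
    move=> i hi. apply: (Hd N) => //. exact: ltnW.
  have Pd : P d by apply: (Hd N); [lia|lia|rewrite PN].
  rewrite sum_bool_all // Pd. symmetry. apply/idP. lia.
- rewrite addn0. case: (ltngtP d N) => h.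
  + exact: IH'.
  + lia.
  + subst d. rewrite PN. symmetry; apply/negbTE; rewrite -leqNgt; exact: sum_bool_le.
Qed.

Lemma per_sub F : per F -> forall x, F (x - k%:Z) = F x + (n%:Z - k%:Z).
Proof. move=> pF x. by rewrite (pF (x - k%:Z)) subrK. Qed.

Lemma decr_le (F : int -> int) : decr F -> forall x x', x <= x' -> F x' <= F x.
Proof.
move=> dF x x' h.
have hm : forall m : nat, F (x + m%:Z) <= F x.
  elim=> [|m IH]; first by rewrite addr0.
  have := dF (x + m%:Z). have -> : x + m%:Z + 1 = x + m.+1%:Z by lia. move=> h1. exact: le_trans h1 IH.
have -> : x' = x + (absz (x' - x))%:Z by lia.
exact: hm.
Qed.

Variables (mu : int -> int) (hmu : cylindric n k mu).

Definition Rf (L : nat -> int -> int) (t : nat) (x y : int) : nat :=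
  if in_skew (L t) mu x y then (\sum_(j < t) ((L j x < y)%R : nat))%N else 0%N.

Section Chain.
Variables (L : nat -> int -> int) (t : nat).
Hypotheses (H0 : forall x, L 0%N x = mu x) (Hp : forall j, per (L j))
  (Hm : forall j x, L j x <= L j.+1 x)
  (Hi : forall j, (j < t)%N -> forall x, L j.+1 (x + 1) <= L j x).

Lemma Lmono j j' x : (j <= j')%N -> L j x <= L j' x.
Proof.
move=> h. rewrite -(subnKC h). elim: (j' - j)%N => [|m IH]; first by rewrite addn0.
rewrite addnS. exact: le_trans IH (Hm _ _).
Qed.

Lemma Ldecr j : (j <= t)%N -> decr (L j).
Proof.
case: j => [|j] hj x.
  rewrite !H0. exact: (proj1 hmu).
exact: le_trans (Hi hj x) (Hm _ _).
Qed.

Lemma chain_cyl : cylindric n k (L t).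
Proof. split; [exact: Ldecr | exact: Hp]. Qed.

Lemma chain_sub : subpart mu (L t).
Proof. move=> x. rewrite -H0. exact: Lmono. Qed.

Lemma chain_ssct : ssct n k (L t) mu t (Rf L t).
Proof.
have pmu : per mu := proj2 hmu.
split.
- move=> x y. rewrite /Rf /in_skew (per_sub (Hp t)) (per_sub pmu) !lerD2r.
  case: ifP => // _. apply: eq_bigr => j _. by rewrite (per_sub (Hp j)) ltrD2r.
- move=> x y. rewrite /Rf. by case: ifP.
- move=> x y hs. rewrite /Rf hs. case: t hs => [|t'] hs.
    move: hs. by rewrite /in_skew H0 andbN.
  rewrite big_ord_recl /= H0. move: hs => /andP [_ h]. rewrite ltNge h /=.
  by rewrite add1n ltnS sum_b_le.
- move=> x y1 y2 h1 h2 hy. rewrite /Rf h1 h2. apply: leq_sum => j _.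
  case: (L j x < y1) /idP => //= h. by rewrite (lt_trans h hy).
- move=> x1 x2 y h1 h2 hx. rewrite /Rf h1 h2.
  case Et: t h1 h2 => [|t'] h1 h2.
    move: h1. by rewrite /in_skew H0 andbN.
  have key : forall j, (j < t'.+1)%N -> L j.+1 x2 <= L j x1.
    move=> j hj. have hj' : (j < t)%N by rewrite Et. have := Hi hj' x1. apply: le_trans.
    apply: (decr_le (Ldecr hj')). lia.
  rewrite [X in (X < _)%N]big_ord_recr [X in (_ < X)%N]big_ord_recl /= H0.
  move: h2 => /andP [hy2 h2]. rewrite [(mu x2 < y)%R]ltNge h2 /=.
  have -> : (L t' x1 < y) = false.
    apply/negbTE. rewrite -leNgt. exact: le_trans hy2 (key t' (ltnSn _)).
  rewrite addn0 add1n ltnS. apply: leq_sum => j _.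
  case: (L j x1 < y) /idP => //= h. by rewrite (le_lt_trans (key j (ltnW (ltn_ord j))) h).
Qed.

Lemma chain_char j x y : (j < t)%N ->
  (y <= L j x) = (y <= mu x) || ((y <= L t x) && (Rf L t x y <= j)%N).
Proof.
move=> hj.
case hy: (y <= mu x) => /=.
  apply: le_trans hy _. rewrite -H0. exact: Lmono.
case ht: (y <= L t x) => /=.
- rewrite /Rf /in_skew ht hy /=.
  have dc : forall d d', (d' <= d)%N -> (d < t)%N -> (L d x < y)%R -> (L d' x < y)%R.
    move=> d d' h1 h2 h3. exact: le_lt_trans (Lmono x h1) h3.
  rewrite leNgt (count_thr dc hj). by rewrite ltnNge negbK.
- apply/negbTE. apply/negP => h. have := le_trans h (Lmono x (ltnW hj)). by rewrite ht.
Qed.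
End Chain.

Lemma Arr_ext (L L' : int -> int) : (forall x, L x = L' x) -> Arr k L = Arr k L'.
Proof. move=> h. apply/ffunP => i. by rewrite !ffunE !h. Qed.

Definition cum (s : seq (turn k)) (j : nat) (x : int) : nat :=
  (\sum_(l < j) nth a0 s l (idx x))%N.
Definition Lg (s : seq (turn k)) (j : nat) (x : int) : int := mu x + (cum s j x)%:Z.

Lemma Lg0 s x : Lg s 0 x = mu x.
Proof. by rewrite /Lg /cum big_ord0 addr0. Qed.

Lemma Lg_per s j : per (Lg s j).
Proof. move=> x. rewrite /Lg /cum idxDk (proj2 hmu x). lia. Qed.

Lemma Lg_S s j x : Lg s j.+1 x = Lg s j x + (nth a0 s j (idx x))%:Z.
Proof. rewrite /Lg /cum big_ord_recr /=. lia. Qed.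

Lemma Lg_mono s j x : Lg s j x <= Lg s j.+1 x.
Proof. rewrite Lg_S. lia. Qed.

Lemma Lg_nth s j (i : 'I_k) : (nth a0 s j i)%:Z = Lg s j.+1 i%:Z - Lg s j i%:Z.
Proof. rewrite Lg_S idx_ord. lia. Qed.

Lemma Lg_inter s : valid_turns (Arr k mu) s ->
  forall j, (j < size s)%N -> forall x, Lg s j.+1 (x + 1) <= Lg s j x.
Proof.
move=> v.
have := @valid_chain s (Lg s) (@Lg_per s) _ (@Lg_mono s) (fun j i _ => Lg_nth s j i).
move=> H. apply/H.
  move=> x. rewrite !Lg0. exact: (proj1 hmu).
by rewrite (@Arr_ext _ mu) // => x; rewrite Lg0.
Qed.

Section Tab.
Variables (t : nat) (lam : int -> int) (R : int -> int -> nat).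
Hypotheses (hl : cylindric n k lam) (hsub : subpart mu lam) (hss : ssct n k lam mu t R).

Definition NN (x : int) : nat := absz (lam x - mu x).
Definition cc (j : nat) (x : int) : nat :=
  (\sum_(d < NN x) (R x (mu x + d%:Z + 1) <= j)%N)%N.
Definition Lt (j : nat) (x : int) : int := mu x + (cc j x)%:Z.

Lemma NN_pt x (d : nat) : (d < NN x)%N -> in_skew lam mu x (mu x + d%:Z + 1).
Proof.
move=> h. have := hsub x. rewrite /NN in h. rewrite /in_skew. move=> h2.
apply/andP; split; lia.
Qed.

Lemma Lt_per j : per (Lt j).
Proof.
have [hper _ _ _ _] := hss.
move=> x. rewrite /Lt /cc /NN.
have e1 := proj2 hl x. have e2 := proj2 hmu x.
have -> : (lam x - mu x) = lam (x + k%:Z) - mu (x + k%:Z) by lia.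
have -> : (\sum_(d < absz (lam (x + k%:Z) - mu (x + k%:Z))) (R x (mu x + d%:Z + 1) <= j)%N)%N =
   (\sum_(d < absz (lam (x + k%:Z) - mu (x + k%:Z))) (R (x + k%:Z) (mu (x + k%:Z) + d%:Z + 1) <= j)%N)%N.
  apply: eq_bigr => d _. rewrite -(hper (x + k%:Z)) addrK. congr (R _ _ <= _)%N. lia.
lia.
Qed.

Lemma Lt_thr j x y : in_skew lam mu x y -> (y <= Lt j x) = (R x y <= j)%N.
Proof.
move=> hs.
have [_ _ _ hcol _] := hss.
have dc : forall d d', (d' <= d)%N -> (d < NN x)%N ->
    (R x (mu x + d%:Z + 1) <= j)%N -> (R x (mu x + d'%:Z + 1) <= j)%N.
  move=> d d' h1 h2 h3. apply: leq_trans h3.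
  have := ltn_neqAle d' d. rewrite h1 andbT. case: eqP => [->|_] // h4.
  apply: hcol; [apply: NN_pt; lia | exact: NN_pt | lia].
have hd : (absz (y - mu x - 1)%R < NN x)%N.
  move: hs; rewrite /in_skew /NN => /andP [h1 h2]. lia.
have := count_thr dc hd.
have -> : mu x + (absz (y - mu x - 1)%R)%:Z + 1 = y.
  move: hs; rewrite /in_skew => /andP [h1 h2]. lia.
move=> ->. rewrite /Lt /cc.
move: hs; rewrite /in_skew => /andP [h1 h2].
set S := (\sum_(d < NN x) _)%N. apply/idP/idP; lia.
Qed.

Lemma Lt0 x : Lt 0 x = mu x.
Proof.
have [_ _ hin _ _] := hss.
rewrite /Lt /cc big1 ?addr0 // => d _.
have := hin _ _ (NN_pt (ltn_ord d)). case: (R _ _) => //.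
Qed.

Lemma cc_le j x : (cc j x <= NN x)%N.
Proof. exact: sum_b_le. Qed.

Lemma Lt_le j x : Lt j x <= lam x.
Proof. have := cc_le j x. have := hsub x. rewrite /Lt /NN. lia. Qed.

Lemma Lt_t x : Lt t x = lam x.
Proof.
have [_ _ hin _ _] := hss.
rewrite /Lt /cc sum_b_all.
  have := hsub x. rewrite /NN. lia.
move=> i. have := hin _ _ (NN_pt (ltn_ord i)). by case/andP.
Qed.

Lemma cc_mono j x : (cc j x <= cc j.+1 x)%N.
Proof. apply: leq_sum => d _. case: (R _ _ <= j)%N /idP => //= h. by rewrite (leq_trans h). Qed.

Lemma Lt_mono j x : Lt j x <= Lt j.+1 x.
Proof. have := cc_mono j x. rewrite /Lt. lia. Qed.

Lemma Lt_inter j x : Lt j.+1 (x + 1) <= Lt j x.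
Proof.
have [_ _ _ _ hrow] := hss.
rewrite leNgt. apply/negP => h.
set y := Lt j.+1 (x + 1) in h.
have m1 := proj1 hmu x. have l1 := proj1 hl x.
have hx0 : Lt 0 x <= Lt j x.
  elim: j {y h} => [|j IH] //. exact: le_trans IH (Lt_mono _ _).
rewrite Lt0 in hx0.
have s1 : in_skew lam mu (x + 1) y.
  rewrite /in_skew Lt_le /=. rewrite -ltNge. exact: le_lt_trans m1 (le_lt_trans hx0 h).
have s0 : in_skew lam mu x y.
  rewrite /in_skew. have := Lt_le j.+1 (x + 1). rewrite -/y => h3.
  apply/andP; split; [exact: le_trans h3 l1 | rewrite -ltNge; exact: le_lt_trans hx0 h].
have r1 : (R (x + 1) y <= j.+1)%N by rewrite -(Lt_thr _ s1).
have r0 : ~~ (R x y <= j)%N by rewrite -(Lt_thr _ s0) -ltNge.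
have := hrow _ _ _ s0 s1 (ltrDl _ _). lia.
Qed.

Definition sT : seq (turn k) := mkseq (fun l => [ffun i : 'I_k => (cc l.+1 i - cc l i)%N]) t.

Lemma sT_size : size sT = t.
Proof. exact: size_mkseq. Qed.

Lemma sT_nth j (i : 'I_k) : (j < t)%N -> (nth a0 sT j i)%:Z = Lt j.+1 i%:Z - Lt j i%:Z.
Proof.
move=> hj. rewrite /sT nth_mkseq // ffunE. have := cc_mono j i. rewrite /Lt. lia.
Qed.

Lemma sT_valid : valid_turns (Arr k mu) sT.
Proof.
rewrite -(@Arr_ext (Lt 0)); last exact: Lt0.
apply/(@valid_chain sT Lt Lt_per _ Lt_mono).
- move=> x. rewrite !Lt0. exact: (proj1 hmu).
- move=> j i hj. apply: sT_nth. by rewrite -sT_size.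
- move=> j _ x. exact: Lt_inter.
Qed.

Lemma Lg_sT j x : (j <= t)%N -> Lg sT j x = Lt j x.
Proof.
elim: j x => [|j IH] x hj; first by rewrite Lg0 Lt0.
have e1 := per_diff (Lg_per sT j) (Lg_per sT j.+1) (fun i => Lg_nth sT j i) x.
have e2 := per_diff (Lt_per j) (Lt_per j.+1) (fun i => sT_nth i hj) x.
have := IH x (ltnW hj). lia.
Qed.


Lemma shape_sT : Lg sT t = lam.
Proof. apply: functional_extensionality => x. by rewrite Lg_sT // Lt_t. Qed.

Lemma fill_sT : Rf (Lg sT) t = R.
Proof.
have [_ hz hin _ _] := hss.
apply: functional_extensionality => x. apply: functional_extensionality => y.
rewrite /Rf shape_sT. case: ifP => hs; last by rewrite hz // hs.
rewrite (eq_bigr (fun j : 'I_t => ((j < R x y)%N : nat))).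
  rewrite sum_lt. have := hin _ _ hs. lia.
move=> j _. rewrite Lg_sT; last exact: ltnW.
by rewrite ltNge (Lt_thr _ hs) ltnNge.
Qed.
End Tab.

Lemma Arr_total (hkn : (k < n)%N) : (\sum_(i < k) Arr k mu i)%N = (n - k)%N.
Proof.
have g : forall m, (m <= k)%N ->
    ((\sum_(i < m) absz (mu (i%:Z - 1) - mu i%:Z))%N)%:Z = mu (-1) - mu (m%:Z - 1).
  elim => [|m IH] hm; first by rewrite big_ord0 subrr.
  rewrite big_ord_recr /= PoszD IH; last exact: ltnW.
  have d := proj1 hmu (m%:Z - 1). rewrite subrK in d.
  have -> : m.+1%:Z - 1 = m%:Z by lia.
  lia.
rewrite (eq_bigr (fun i : 'I_k => absz (mu (i%:Z - 1) - mu i%:Z))); last by move=> i _; rewrite ffunE.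
apply/eqP. rewrite -eqz_nat. apply/eqP. rewrite g //.
have e := proj2 hmu (-1). rewrite (_ : -1 + k%:Z = k%:Z - 1) in e; last lia.
lia.
Qed.

Variables (hkn : (k < n)%N) (t : nat).

Lemma tab_eq (T1 T2 : tableau n k mu t) :
  tab_shape T1 = tab_shape T2 -> tab_fill T1 = tab_fill T2 -> T1 = T2.
Proof.
case: T1 => s1 f1 a1 b1 c1; case: T2 => s2 f2 a2 b2 c2 /= e1 e2. subst.
f_equal; apply: proof_irrelevance.
Qed.

Lemma mg_eq (g1 g2 : marble_game n k t) :
  mg_init g1 = mg_init g2 -> mg_turns g1 = mg_turns g2 -> g1 = g2.
Proof.
case: g1 => i1 s1 a1 b1 c1; case: g2 => i2 s2 a2 b2 c2 /= e1 e2. subst.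
f_equal; apply: proof_irrelevance.
Qed.

Definition GT := {g : marble_game n k t | mg_init g = Arr k mu}.

Lemma GT_eq (G1 G2 : GT) : sval G1 = sval G2 -> G1 = G2.
Proof. case: G1 => g1 p1; case: G2 => g2 p2 /= e. subst. f_equal. apply: proof_irrelevance. Qed.

Lemma G_valid (G : GT) : valid_turns (Arr k mu) (mg_turns (sval G)).
Proof. have := mg_valid (sval G). by rewrite (svalP G). Qed.

Lemma G_inter (G : GT) : forall j, (j < t)%N ->
  forall x, Lg (mg_turns (sval G)) j.+1 (x + 1) <= Lg (mg_turns (sval G)) j x.
Proof. move=> j hj. apply: Lg_inter (G_valid G) _ _. by rewrite mg_length. Qed.

Definition fT (G : GT) : tableau n k mu t :=
  @Tableau n k mu t _ _
    (chain_cyl (Lg0 _) (@Lg_per _) (@Lg_mono _) (G_inter G))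
    (chain_sub t (Lg0 _) (@Lg_mono _))
    (chain_ssct (Lg0 _) (@Lg_per _) (@Lg_mono _) (G_inter G)).

Definition gG (T : tableau n k mu t) : GT :=
  exist _ (@MarbleGame n k t (Arr k mu) (sT t (tab_shape T) (tab_fill T))
      (Arr_total hkn) (sT_size _ _ _)
      (sT_valid (tab_shape_cyl T) (tab_sub T) (tab_ssct T))) erefl.

Lemma fgK : cancel gG fT.
Proof.
move=> T. apply: tab_eq => /=.
- exact: shape_sT (tab_shape_cyl T) (tab_sub T) (tab_ssct T).
- exact: fill_sT (tab_shape_cyl T) (tab_sub T) (tab_ssct T).
Qed.

Lemma fT_inj : injective fT.
Proof.
move=> G1 G2 e.
have es : Lg (mg_turns (sval G1)) t = Lg (mg_turns (sval G2)) t by move: (congr1 (@tab_shape _ _ _ _) e).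
have ef : Rf (Lg (mg_turns (sval G1))) t = Rf (Lg (mg_turns (sval G2))) t
  by move: (congr1 (@tab_fill _ _ _ _) e).
set s1 := mg_turns (sval G1) in es ef. set s2 := mg_turns (sval G2) in es ef.
have eL : forall j, (j <= t)%N -> forall x, Lg s1 j x = Lg s2 j x.
  move=> j hj x. case: (ltngtP j t) hj => // [hj _|-> _]; last by rewrite es.
  have c1 := chain_char (t := t) (Lg0 s1) (@Lg_mono s1) x _ hj.
  have c2 := chain_char (t := t) (Lg0 s2) (@Lg_mono s2) x _ hj.
  apply/eqP. rewrite eq_le. apply/andP; split.
  + by rewrite c2 -es -ef -c1.
  + by rewrite c1 es ef -c2.
have et : s1 = s2.
  apply: (@eq_from_nth _ a0); first by rewrite /s1 /s2 !mg_length.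
  move=> j hj. rewrite /s1 mg_length in hj.
  apply/ffunP => i. apply/eqP. rewrite -eqz_nat !Lg_nth !eL //; exact: ltnW.
apply: GT_eq. apply: mg_eq => //. by rewrite (svalP G1) (svalP G2).
Qed.

Lemma main_sec : exists f : GT -> tableau n k mu t, bijective f.
Proof.
exists fT. exists gG => //. 2: exact: fgK.
move=> G. apply: fT_inj. by rewrite fgK.
Qed.
End S.

Theorem mainTheorem8 (n k : nat) (hk : (1 <= k)%N) (hkn : (k < n)%N)
    (mu : int -> int) (hmu : cylindric n k mu) (t : nat) :
  exists f : {g : marble_game n k t | mg_init g = Arr k mu} -> tableau n k mu t,
    bijective f.
Proof.
exact: (@main_sec n k hk mu hmu hkn t).
Qed.
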